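(* Let $n\geq 3$ be an integer and let $\mathcal{E}_n$ be the Fomin–Kirillov algebra over an algebraically closed field $k$. Then $\mathcal{E}_n$ admits no truncated point modules of degree greater than $1$; that is, $\mathcal{P}_d(\mathcal{E}_n)=\emptyset$ for every $d\geq 2$.
   Context: The Fomin–Kirillov algebra $\mathcal{E}_n$ is the graded $k$-algebra generated by elements $x_{ij}$, $1\leq i<j\leq n$, all of degree $1$, subject to the relations: $x_{ij}^2=0$ for all $i<j$; $x_{ij}x_{kl}-x_{kl}x_{ij}=0$ for all $i<j$, $k<l$ with $\{i,j\}\cap\{k,l\}=\emptyset$; $x_{ij}x_{jk}-x_{jk}x_{ik}-x_{ik}x_{ij}=0$ and $x_{jk}x_{ij}-x_{ik}x_{jk}-x_{ij}x_{ik}=0$ for all $i<j<k$. For a connected graded $k$-algebra $A=k\oplus A_1\oplus A_2\oplus\cdots$ generated in degree $1$, a degree-$d$ (or $d$-truncated) point module is a graded cyclic left $A$-module $M=M_0\oplus\cdots\oplus M_d$ generated in degree $0$ with Hilbert series $1+t+\cdots+t^d$ (each $M_i$ one-dimensional). $\mathcal{P}_d(A)$ denotes the space of $d$-truncated point modules of $A$. *)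

(* Defs.v *)
From HB Require Import structures.
From mathcomp Require Import all_boot all_order all_algebra.
Set Implicit Arguments. Unset Strict Implicit. Unset Printing Implicit Defensive.
Import GRing.Theory.
Local Open Scope ring_scope.

(* A left module over the Fomin-Kirillov algebra E_n on the k-vector space V is
   given (universal property of the presentation) by endomorphisms
   x i j of V, for 0 <= i < j < n (generators x_{i+1,j+1}), satisfying the
   defining relations, where the product a*b acts as the composition a \o b.
   Only the values x i j with i < j are used. *)
Definition FK_relations (k : fieldType) (V : vectType k) (n : nat)
    (x : 'I_n -> 'I_n -> 'End(V)) : Prop :=
  [/\ (forall i j : 'I_n, (i < j)%N -> (x i j \o x i j)%VF = 0),
      (forall i j p q : 'I_n, (i < j)%N -> (p < q)%N ->
          [&& i != p, i != q, j != p & j != q] ->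
          (x i j \o x p q)%VF - (x p q \o x i j)%VF = 0),
      (forall i j l : 'I_n, (i < j)%N -> (j < l)%N ->
          (x i j \o x j l)%VF - (x j l \o x i l)%VF - (x i l \o x i j)%VF = 0)
    & (forall i j l : 'I_n, (i < j)%N -> (j < l)%N ->
          (x j l \o x i j)%VF - (x i l \o x j l)%VF - (x i j \o x i l)%VF = 0)].

Definition is_trunc_point_module (k : fieldType) (V : vectType k) (d : nat) (n : nat)
    (x : 'I_n -> 'I_n -> 'End(V)) (M : nat -> {vspace V}) : Prop :=
  [/\ FK_relations x,
      directv (\sum_(t < d.+1) M t)%VS /\ (\sum_(t < d.+1) M t)%VS = fullv,
      (forall t, (t <= d)%N -> \dim (M t) = 1%N) /\ (forall t, (d < t)%N -> M t = 0%VS),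
      (forall (i j : 'I_n) t, (i < j)%N -> (x i j @: M t <= M t.+1)%VS)
    & (forall U : {vspace V}, (M 0%N <= U)%VS ->
          (forall i j : 'I_n, (i < j)%N -> (x i j @: U <= U)%VS) -> U = fullv)].

(* Main.v *)
Require Import Defs.
From HB Require Import structures.
From mathcomp Require Import all_boot all_order all_algebra ring.
Import GRing.Theory.
Local Open Scope ring_scope.

Lemma dimfull (k : fieldType) (V : vectType k) d (M : nat -> {vspace V}) :
  directv (\sum_(t < d.+1) M t)%VS -> (\sum_(t < d.+1) M t)%VS = fullv ->
  (forall t, (t <= d)%N -> \dim (M t) = 1%N) -> \dim (fullv : {vspace V}) = d.+1.
Proof.
move=> /directvP /= hd hf h1.
rewrite -hf hd (eq_bigr (fun _ => 1%N)); last by move=> t _; rewrite h1 // -ltnS.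
by rewrite sum1_card card_ord.
Qed.
Lemma tri (k : fieldType) (a1 a2 a3 b1 b2 b3 : k) :
  b1 * a1 = 0 -> b2 * a2 = 0 -> b3 * a3 = 0 ->
  b1 * a3 - b3 * a2 - b2 * a1 = 0 -> b3 * a1 - b2 * a3 - b1 * a2 = 0 ->
  [|| b1 != 0, b2 != 0 | b3 != 0] -> [/\ a1 = 0, a2 = 0 & a3 = 0].
Proof.
have zl : forall u v : k, u != 0 -> u * v = 0 -> v = 0.
  by move=> u v nu /eqP; rewrite mulf_eq0 (negPf nu) => /eqP.
have zr : forall u v : k, v != 0 -> u * v = 0 -> u = 0.
  by move=> u v nv /eqP; rewrite mulf_eq0 (negPf nv) orbF => /eqP.
move=> h1 h2 h3 e1 e2 /or3P[nb|nb|nb].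
- have a10 := zl _ _ nb h1.
  have a20 : a2 = 0.
    have [//|na2] := eqVneq a2 0; have b20 := zr _ _ na2 h2.
    have e : b1 * a2 = - (b3 * a1 - b2 * a3 - b1 * a2) by rewrite a10 b20; ring.
    by rewrite e2 oppr0 in e; move: (zl _ _ nb e) => /eqP; rewrite (negPf na2).
  split=> //; apply: (zl _ _ nb).
  by rewrite -e1 a10 a20; ring.
- have a20 := zl _ _ nb h2.
  have a10 : a1 = 0.
    have [//|na1] := eqVneq a1 0; have b10 := zr _ _ na1 h1.
    have e : b2 * a1 = - (b1 * a3 - b3 * a2 - b2 * a1) by rewrite a20 b10; ring.
    by rewrite e1 oppr0 in e; move: (zl _ _ nb e) => /eqP; rewrite (negPf na1).
  split=> //; apply: (zl _ _ nb).
  by rewrite -oppr0 -e2 a10 a20; ring.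
- have a30 := zl _ _ nb h3.
  have a10 : a1 = 0.
    have [//|na1] := eqVneq a1 0; have b10 := zr _ _ na1 h1.
    have e : b3 * a1 = (b3 * a1 - b2 * a3 - b1 * a2) by rewrite a30 b10; ring.
    by rewrite e2 in e; move: (zl _ _ nb e) => /eqP; rewrite (negPf na1).
  split=> //; apply: (zl _ _ nb).
  by rewrite -oppr0 -e1 a10 a30; ring.
Qed.

Lemma line_of (k : fieldType) (V : vectType k) (U : {vspace V}) :
  \dim U = 1%N -> U = <[vpick U]>%VS /\ vpick U != 0.
Proof.
move=> hU.
have nz : vpick U != 0 by rewrite vpick0; apply/eqP => h; rewrite h dimv0 in hU.
split=> //; apply/eqP; rewrite eq_sym eqEdim -memvE memv_pick dim_vline nz hU //.
Qed.

Arguments line_of {k V U}.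
Theorem theorem1p1 (k : closedFieldType) (n : nat) (hn : (3 <= n)%N)
    (d : nat) (hd : (2 <= d)%N)
    (V : vectType k) (x : 'I_n -> 'I_n -> 'End(V)) (M : nat -> {vspace V}) :
  ~ is_trunc_point_module d x M.
Proof.
case=> [[R1 R2 R3 R4] [dirM sumM] [dim1 dim0] xM gen].
have [M0 nz0] := line_of (dim1 0%N isT).
have [M1 nz1] := line_of (dim1 1%N (ltnW hd)).
have [M2 nz2] := line_of (dim1 2%N hd).
set v0 := vpick (M 0%N) in M0 nz0.
set v1 := vpick (M 1%N) in M1 nz1.
set v2 := vpick (M 2%N) in M2 nz2.
have coef : forall t v w, M t = <[v]>%VS -> M t.+1 = <[w]>%VS ->
    exists c : 'I_n -> 'I_n -> k, forall i j : 'I_n, (i < j)%N -> x i j v = c i j *: w.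
  move=> t v w Mt Mt1.
  have h : forall i : 'I_n, exists ci : 'I_n -> k, forall j : 'I_n, (i < j)%N -> x i j v = ci j *: w.
    move=> i.
    have hj : forall j : 'I_n, exists c : k, (i < j)%N -> x i j v = c *: w.
      move=> j; case: (ltnP i j) => ij; last by exists 0.
      have : x i j v \in <[w]>%VS.
        rewrite -Mt1; apply: (subvP (xM i j t ij)); apply: memv_img; rewrite Mt memv_line //.
      by case/vlineP => c ->; exists c.
    by have [c hc] := @fin_all_exists 'I_n (fun _ => k) (fun (j : 'I_n) (c : k) => (i < j)%N -> x i j v = c *: w) hj; exists c.
  by have [c hc] := @fin_all_exists 'I_n (fun _ => 'I_n -> k) (fun (i : 'I_n) (ci : 'I_n -> k) => forall j : 'I_n, (i < j)%N -> x i j v = ci j *: w) h; exists c.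
have [a ha] := coef 0%N v0 v1 M0 M1.
have [b hb] := coef 1%N v1 v2 M1 M2.
have dimF := @dimfull _ _ _ _ dirM sumM dim1.
have sc : forall c : k, c *: v2 = 0 -> c = 0.
  by move=> c /eqP; rewrite scaler_eq0 (negPf nz2) orbF => /eqP.
have xx : forall u w p q : 'I_n, (u < w)%N -> (p < q)%N ->
    (x u w \o x p q)%VF v0 = (b u w * a p q) *: v2.
  by move=> u w p q uw pq; rewrite comp_lfunE ha // linearZ /= hb // scalerA mulrC.
have S1 : forall i j : 'I_n, (i < j)%N -> b i j * a i j = 0.
  move=> i j ij; apply: sc; rewrite -xx // (R1 i j ij) zero_lfunE //.
have S2 : forall i j p q : 'I_n, (i < j)%N -> (p < q)%N ->
    [&& i != p, i != q, j != p & j != q] -> b i j * a p q - b p q * a i j = 0.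
  move=> i j p q ij pq dis; apply: sc.
  by rewrite scalerBl -!xx // -opp_lfunE -add_lfunE (R2 i j p q ij pq dis) zero_lfunE.
have S3 : forall i j l : 'I_n, (i < j)%N -> (j < l)%N ->
    b i j * a j l - b j l * a i l - b i l * a i j = 0.
  move=> i j l ij jl; have il := ltn_trans ij jl; apply: sc.
  by rewrite !scalerBl -!xx // -!opp_lfunE -!add_lfunE (R3 i j l ij jl) zero_lfunE.
have S4 : forall i j l : 'I_n, (i < j)%N -> (j < l)%N ->
    b j l * a i j - b i l * a j l - b i j * a i l = 0.
  move=> i j l ij jl; have il := ltn_trans ij jl; apply: sc.
  by rewrite !scalerBl -!xx // -!opp_lfunE -!add_lfunE (R4 i j l ij jl) zero_lfunE.
have tri3 : forall l1 l2 l3 : 'I_n, (l1 < l2)%N -> (l2 < l3)%N ->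
    [|| b l1 l2 != 0, b l1 l3 != 0 | b l2 l3 != 0] ->
    [/\ a l1 l2 = 0, a l1 l3 = 0 & a l2 l3 = 0].
  move=> l1 l2 l3 h12 h23; have h13 := ltn_trans h12 h23.
  by apply: tri; [apply: S1|apply: S1|apply: S1|apply: S3|apply: S4].
have [p [q [pq na]]] : exists p q : 'I_n, (p < q)%N /\ a p q != 0.
  case: (boolP [exists p : 'I_n, exists q : 'I_n, (p < q)%N && (a p q != 0)]).
    by case/existsP=> p /existsP[q /andP[pq na]]; exists p, q.
  move/existsPn=> hA; exfalso.
  have hU : M 0%N = fullv.
    apply: gen => // i j ij.
    have ha0 : a i j = 0 by move: (hA i) => /existsPn/(_ j); rewrite ij /= negbK => /eqP.
    by rewrite M0 limg_line ha // ha0 scale0r -memvE mem0v.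
  by move: (dim1 0%N isT); rewrite hU dimF => -[d0]; rewrite d0 in hd.
have [i [j [ij nb]]] : exists i j : 'I_n, (i < j)%N /\ b i j != 0.
  case: (boolP [exists p : 'I_n, exists q : 'I_n, (p < q)%N && (b p q != 0)]).
    by case/existsP=> i /existsP[j /andP[ij nb]]; exists i, j.
  move/existsPn=> hB; exfalso.
  have hU : (M 0%N + M 1%N)%VS = fullv.
    apply: gen; first exact: addvSl.
    move=> i j ij; rewrite limgD subv_add; apply/andP; split.
      exact: subv_trans (xM i j 0%N ij) (addvSr _ _).
    have hb0 : b i j = 0 by move: (hB i) => /existsPn/(_ j); rewrite ij /= negbK => /eqP.
    by rewrite M1 limg_line hb // hb0 scale0r -memvE mem0v.
  have := (dimv_add_leqif (M 0%N) (M 1%N)).1.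
  by rewrite hU dimF (dim1 0%N isT) (dim1 1%N (ltnW hd)) ltnS leqNgt hd.
have abij : a i j = 0.
  by move: (S1 i j ij) => /eqP; rewrite mulf_eq0 (negPf nb) => /eqP.
case: (boolP [&& i != p, i != q, j != p & j != q]) => [dis|].
  move: (S2 i j p q ij pq dis) => /eqP.
  by rewrite abij mulr0 subr0 mulf_eq0 (negPf nb) (negPf na).
rewrite !negb_and !negbK => /or4P[/eqP e|/eqP e|/eqP e|/eqP e]; subst.
- case: (ltngtP j q) => [jq|qj|/val_inj e]. 
  + by have [_ h _] := tri3 p j q ij jq ltac:(by rewrite nb); rewrite h eqxx in na.
  + by have [h _ _] := tri3 p q j pq qj ltac:(by rewrite nb orbT); rewrite h eqxx in na.
  + by subst; rewrite abij eqxx in na.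
- by have [h _ _] := tri3 p q j pq ij ltac:(by rewrite nb !orbT); rewrite h eqxx in na.
- by have [_ _ h] := tri3 i p q ij pq ltac:(by rewrite nb); rewrite h eqxx in na.
- case: (ltngtP i p) => [ip|pi|/val_inj e].
  + by have [_ _ h] := tri3 i p q ip pq ltac:(by rewrite nb orbT); rewrite h eqxx in na.
  + by have [_ h _] := tri3 p i q pi ij ltac:(by rewrite nb !orbT); rewrite h eqxx in na.
  + by subst; rewrite abij eqxx in na.
Qed.
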